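(* In the linear setting of the context, for all $\lambda>0$, $\sigma\in(0,1)$, $\theta\ge0$ and all $t\in[0,t_\infty)$, $$\eta(t)+\theta\big(\sigma x(t)^\top Qx(t)-2x(t)^\top PBKe(t^-)\big)\ge0\quad\text{and}\quad\eta(t)\ge0.$$ Moreover, for given $t_i$, $x(t_i)$ and $\eta(t_i)\ge0$, the next execution time given by the static rule $t^s_{i+1}=\inf\{t>t_i:\ \sigma x(t)^\top Qx(t)-2x(t)^\top PBKe(t^-)\le0\}$ is at most the next execution time $t^d_{i+1}$ given by the dynamic rule.
   Context: Consider $\dot x=Ax+Bu$, $x\in\mathbb{R}^n$, $u\in\mathbb{R}^m$, and a gain $K$ such that $A+BK$ is Hurwitz; let $P,Q$ be symmetric positive definite with $(A+BK)^\top P+P(A+BK)=-Q$, and $V(x)=x^\top Px$. The input is $u(t)=Kx(t_i)$ for $t\in[t_i,t_{i+1})$, with $e(t)=x(t_i)-x(t)$, so $\dot x=Ax+BK(x+e)$. $t_\infty=\lim t_i$ if infinitely many executions, else $+\infty$; $g(t^-)$ is the left limit. Dynamic event generator with parameters $\sigma\in(0,1)$, $\lambda>0$, $\theta\ge0$: $\dot\eta=-\lambda\eta+\sigma x^\top Qx-2x^\top PBKe$, $\eta(0)=0$ (resp. from $\eta(t_i)$ after $t_i$); $t_0=0$, $t_{i+1}=\inf\{t>t_i:\ \eta(t)+\theta(\sigma x(t)^\top Qx(t)-2x(t)^\top PBKe(t^-))\le0\}$. Assume $x(t_i)\ne0$ for all $i$. *)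

(* Defs.v *)
(* classical reals. Vectors of R^n are functions nat -> R
   (only indices < n matter), matrices are nat -> nat -> R. *)
From Stdlib Require Import Reals Lra.
Open Scope R_scope.

Definition Vec := nat -> R.
Definition Mat := nat -> nat -> R.

Fixpoint rsum (n : nat) (f : nat -> R) : R :=
  match n with
  | O => 0
  | S k => rsum k f + f k
  end.

Definition mv (k : nat) (M : Mat) (v : Vec) : Vec :=
  fun i => rsum k (fun j => M i j * v j).

Definition mm (k : nat) (M N : Mat) : Mat :=
  fun i j => rsum k (fun l => M i l * N l j).

Definition madd (M N : Mat) : Mat := fun i j => M i j + N i j.
Definition mtr (M : Mat) : Mat := fun i j => M j i.

Definition dot (n : nat) (u v : Vec) : R := rsum n (fun i => u i * v i).

Definition vnonzero (n : nat) (v : Vec) : Prop := exists j, (j < n)%nat /\ v j <> 0.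

Definition symmetric (n : nat) (M : Mat) : Prop :=
  forall i j, (i < n)%nat -> (j < n)%nat -> M i j = M j i.

Definition posdef (n : nat) (M : Mat) : Prop :=
  symmetric n M /\ forall v, vnonzero n v -> 0 < dot n v (mv n M v).

(* Hurwitz: every (complex) eigenvalue alpha + i beta, with eigenvector
   a + i b <> 0, has negative real part.  M(a+ib) = (alpha+i beta)(a+ib). *)
Definition hurwitz (n : nat) (M : Mat) : Prop :=
  forall (alpha beta : R) (a b : Vec),
    (exists j, (j < n)%nat /\ (a j <> 0 \/ b j <> 0)) ->
    (forall i, (i < n)%nat ->
        mv n M a i = alpha * a i - beta * b i /\
        mv n M b i = beta * a i + alpha * b i) ->
    alpha < 0.

Definition lyapunov (n : nat) (M P Q : Mat) : Prop :=
  forall i j, (i < n)%nat -> (j < n)%nat ->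
    madd (mm n (mtr M) P) (mm n P M) i j = - Q i j.

Definition is_inf (S : R -> Prop) (a : R) : Prop :=
  (forall s, S s -> a <= s) /\ (forall b, (forall s, S s -> b <= s) -> b <= a).

Definition closed_loop (m : nat) (A B K : Mat) : Mat := madd A (mm m B K).

Definition trig_term (n m : nat) (B K P Q : Mat) (sigma : R) (x e : Vec) : R :=
  sigma * dot n x (mv n Q x) - 2 * dot n x (mv n P (mv m B (mv n K e))).

(* x solves  xdot = A x + B K c  on all of R (c = held sample x(t_i)) *)
Definition solves_x (n m : nat) (A B K : Mat) (c : Vec) (x : R -> Vec) : Prop :=
  forall t i, (i < n)%nat ->
    derivable_pt_lim (fun s => x s i) t (mv n A (x t) i + mv m B (mv n K c) i).

Definition solves_eta (n m : nat) (B K P Q : Mat) (lam sigma : R) (c : Vec)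
    (x : R -> Vec) (eta : R -> R) : Prop :=
  forall t, derivable_pt_lim eta t
    (- lam * eta t + trig_term n m B K P Q sigma (x t) (fun j => c j - x t j)).

(* set of admissible execution indices: all of nat (infinitely many
   executions) or {0..N} (last execution t_N) *)
Definition valid_idx (fin : option nat) (i : nat) : Prop :=
  match fin with None => True | Some N => (i <= N)%nat end.

(* Main.v *)
Require Import Defs.
From Stdlib Require Import Reals Lra Lia Classical.
Open Scope R_scope.

Lemma dl_eq f x l l' : derivable_pt_lim f x l -> l = l' -> derivable_pt_lim f x l'.
Proof. intros H ->; exact H. Qed.

Lemma dlin k x : derivable_pt_lim (fun s => k * s) x k.
Proof.
  pose proof (derivable_pt_lim_scal id k x 1 (derivable_pt_lim_id x)) as H.
  apply (dl_eq _ _ _ _ H); ring.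
Qed.

Lemma dexp k x : derivable_pt_lim (fun s => exp (k*s)) x (k * exp (k*x)).
Proof.
  pose proof (derivable_pt_lim_comp (fun s => k*s) exp x k (exp (k*x)) (dlin k x) (derivable_pt_lim_exp _)) as H.
  apply (dl_eq _ _ _ _ H); ring.
Qed.

Lemma dprod k f x l : derivable_pt_lim f x l ->
  derivable_pt_lim (fun s => exp (k*s) * f s) x (exp (k*x) * (k * f x + l)).
Proof.
  intro H.
  pose proof (derivable_pt_lim_mult _ _ _ _ _ (dexp k x) H) as H2.
  apply (dl_eq _ _ _ _ H2); ring.
Qed.

Lemma grow k f f' a b : a < b -> 0 <= f a ->
  (forall c, derivable_pt_lim f c (f' c)) ->
  (forall c, a < c < b -> 0 < k * f c + f' c) -> 0 < f b.
Proof.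
  intros Hab Ha Hd Hp.
  destruct (MVT_cor2 (fun s => exp (k*s) * f s) (fun s => exp (k*s) * (k * f s + f' s)) a b Hab)
    as [c [Hc1 Hc2]].
  { intros c _. apply dprod, Hd. }
  pose proof (exp_pos (k*a)) as E1. pose proof (exp_pos (k*b)) as E2. pose proof (exp_pos (k*c)) as E3.
  pose proof (Hp c Hc2) as P.
  assert (Q1 : 0 < exp (k*c) * (k * f c + f' c) * (b - a)).
  { apply Rmult_lt_0_compat; [apply Rmult_lt_0_compat|]; lra. }
  assert (Q2 : 0 <= exp (k*a) * f a) by (apply Rmult_le_pos; lra).
  assert (Q3 : 0 < exp (k*b) * f b) by lra.
  destruct (Rle_or_lt (f b) 0) as [h|h]; [|exact h].
  assert (exp (k*b) * f b <= 0). { rewrite <- (Rmult_0_r (exp (k*b))); apply Rmult_le_compat_l; lra. } lra.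
Qed.

Lemma cplus f g x : continuity_pt f x -> continuity_pt g x -> continuity_pt (fun t => f t + g t) x.
Proof. intros; exact (continuity_pt_plus f g x H H0). Qed.
Lemma cminus f g x : continuity_pt f x -> continuity_pt g x -> continuity_pt (fun t => f t - g t) x.
Proof. intros; exact (continuity_pt_minus f g x H H0). Qed.
Lemma cmult f g x : continuity_pt f x -> continuity_pt g x -> continuity_pt (fun t => f t * g t) x.
Proof. intros; exact (continuity_pt_mult f g x H H0). Qed.
Lemma cconst (a : R) x : continuity_pt (fun _ => a) x.
Proof. apply continuity_pt_const. intros ? ?; reflexivity. Qed.

Lemma crsum (F : R -> nat -> R) x0 n :
  (forall k, (k < n)%nat -> continuity_pt (fun t => F t k) x0) ->
  continuity_pt (fun t => rsum n (F t)) x0.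
Proof.
  induction n as [|n IH]; intros H; simpl.
  - apply cconst.
  - apply cplus. apply IH; intros; apply H; lia. apply H; lia.
Qed.

Lemma cmv (v : R -> Vec) M k x0 :
  (forall j, (j < k)%nat -> continuity_pt (fun t => v t j) x0) ->
  forall i, continuity_pt (fun t => mv k M (v t) i) x0.
Proof.
  intros H i. unfold mv. apply crsum. intros j Hj. apply cmult. apply cconst. apply H; auto.
Qed.

Lemma cdot (u v : R -> Vec) n x0 :
  (forall j, (j < n)%nat -> continuity_pt (fun t => u t j) x0) ->
  (forall j, (j < n)%nat -> continuity_pt (fun t => v t j) x0) ->
  continuity_pt (fun t => dot n (u t) (v t)) x0.
Proof.
  intros Hu Hv. unfold dot. apply crsum. intros j Hj. apply cmult; auto.
Qed.

Lemma cD n m A B K P Q sigma theta lam c x eta t0 :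
  solves_x n m A B K c x -> solves_eta n m B K P Q lam sigma c x eta ->
  continuity_pt (fun t => eta t + theta * trig_term n m B K P Q sigma (x t) (fun j => c j - x t j)) t0.
Proof.
  intros Hx He.
  assert (Cx : forall j, (j < n)%nat -> continuity_pt (fun t => x t j) t0).
  { intros j Hj. apply derivable_continuous_pt. exists (mv n A (x t0) j + mv m B (mv n K c) j).
    apply Hx; auto. }
  apply cplus.
  { apply derivable_continuous_pt. eexists. apply He. }
  apply cmult. apply cconst. unfold trig_term.
  apply cminus; apply cmult; try apply cconst; apply cdot; auto.
  - intros j _. apply cmv; auto.
  - intros j _. apply cmv. intros l _. apply cmv. intros q _. apply cmv.
    intros r Hr. apply cminus. apply cconst. auto.
Qed.

Lemma contneg f t : continuity_pt f t -> f t < 0 -> forall a, a < t -> exists s, a < s < t /\ f s < 0.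
Proof.
  intros Hc Hn a Ha.
  destruct (Hc (- f t)) as [alp [Halp H]]. lra.
  set (s := Rmax (t - alp/2) ((a+t)/2)).
  assert (s1 : t - alp/2 <= s) by apply Rmax_l.
  assert (s2 : (a+t)/2 <= s) by apply Rmax_r.
  assert (s3 : s < t). { unfold s; apply Rmax_lub_lt; lra. }
  exists s. split. lra.
  assert (Hd : R_dist (f s) (f t) < - f t).
  { apply H. split. split. exact I. lra. simpl. unfold R_dist. rewrite Rabs_left; lra. }
  unfold R_dist in Hd. apply Rabs_def2 in Hd. lra.
Qed.

Lemma inf_nonempty S a : is_inf S a -> exists s, S s.
Proof.
  intros [H1 H2]. apply NNPP. intro Hn.
  assert (a + 1 <= a). { apply H2. intros s Hs. exfalso. apply Hn. eauto. } lra.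
Qed.

Lemma seg (D : R -> R) t0 t1 t : is_inf (fun s => t0 < s /\ D s <= 0) t1 ->
  continuity_pt D t -> t0 < t <= t1 -> 0 <= D t /\ (forall s, t0 < s < t1 -> 0 < D s).
Proof.
  intros [H1 H2] Hc Ht.
  assert (Hs : forall s, t0 < s < t1 -> 0 < D s).
  { intros s Hs. destruct (Rlt_or_le 0 (D s)) as [h|h]; auto.
    assert (t1 <= s) by (apply H1; split; lra). lra. }
  split; auto.
  destruct (Rlt_or_le (D t) 0) as [h|h]; auto.
  destruct (contneg D t Hc h t0 (proj1 Ht)) as [s [[a1 a2] a3]].
  assert (t1 <= s) by (apply H1; split; lra). lra.
Qed.

Lemma mv_zero k M (v : Vec) : (forall j, v j = 0) -> forall i, mv k M v i = 0.
Proof. intros H i. unfold mv. induction k; simpl. reflexivity. rewrite IHk, H; ring. Qed.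

Lemma dot_zero k (u v : Vec) : (forall j, v j = 0) -> dot k u v = 0.
Proof. intros H. unfold dot. induction k; simpl. reflexivity. rewrite IHk, H; ring. Qed.

Lemma eta_seg n m B K P Q lam sigma theta c x eta t0 t :
  0 < lam -> 0 <= theta -> solves_eta n m B K P Q lam sigma c x eta -> 0 <= eta t0 -> t0 < t ->
  (forall s, t0 < s < t -> 0 < eta s + theta * trig_term n m B K P Q sigma (x s) (fun j => c j - x s j)) ->
  0 <= eta t + theta * trig_term n m B K P Q sigma (x t) (fun j => c j - x t j) -> 0 <= eta t.
Proof.
  intros Hl Ht He H0 Htt Hs Hf.
  destruct (Req_dec theta 0) as [->|Hz].
  { rewrite Rmult_0_l, Rplus_0_r in Hf. exact Hf. }
  apply Rlt_le.
  apply (grow (lam + /theta) eta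
     (fun s => - lam * eta s + trig_term n m B K P Q sigma (x s) (fun j => c j - x s j)) t0 t); auto.
  intros c0 Hc. specialize (Hs c0 Hc).
  replace ((lam + / theta) * eta c0 +
    (- lam * eta c0 + trig_term n m B K P Q sigma (x c0) (fun j => c j - x c0 j)))
   with (/theta * (eta c0 + theta * trig_term n m B K P Q sigma (x c0) (fun j => c j - x c0 j)))
   by (field; lra).
  apply Rmult_lt_0_compat; auto. apply Rinv_0_lt_compat; lra.
Qed.

Lemma static_pt n m B K P Q lam sigma theta ti x eta t :
  0 < lam -> 0 <= theta -> solves_eta n m B K P Q lam sigma (x ti) x eta -> 0 <= eta ti ->
  ti < t ->
  eta t + theta * trig_term n m B K P Q sigma (x t) (fun j => x ti j - x t j) <= 0 ->
  exists s, ti < s <= t /\ trig_term n m B K P Q sigma (x s) (fun j => x ti j - x s j) <= 0.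
Proof.
  intros Hl Ht He H0 Htt HD.
  destruct (Rle_or_lt (trig_term n m B K P Q sigma (x t) (fun j => x ti j - x t j)) 0) as [h|h].
  { exists t. split; [lra|exact h]. }
  apply NNPP; intro Hn.
  assert (Hp : 0 < eta t).
  { apply (grow lam eta
     (fun s => - lam * eta s + trig_term n m B K P Q sigma (x s) (fun j => x ti j - x s j)) ti t); auto.
    intros c0 Hc.
    destruct (Rlt_or_le 0 (trig_term n m B K P Q sigma (x c0) (fun j => x ti j - x c0 j))) as [h2|h2].
    - lra.
    - exfalso. apply Hn. exists c0. split; [lra|exact h2]. }
  assert (0 <= theta * trig_term n m B K P Q sigma (x t) (fun j => x ti j - x t j)).
  { apply Rmult_le_pos; lra. }
  lra.
Qed.

Theorem mainTheorem5 :
  forall (n m : nat) (A B K P Q : Mat) (lam sigma theta : R),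
    0 < lam -> 0 < sigma < 1 -> 0 <= theta ->
    hurwitz n (closed_loop m A B K) ->
    posdef n P -> posdef n Q ->
    lyapunov n (closed_loop m A B K) P Q ->
  (* Part 1: the dynamic event-triggered closed loop *)
  (forall (fin : option nat) (ts : nat -> R)
          (xs : nat -> R -> Vec) (etas : nat -> R -> R),
     ts 0%nat = 0 ->
     etas 0%nat 0 = 0 ->
     (forall i, valid_idx fin i ->
        vnonzero n (xs i (ts i)) /\
        solves_x n m A B K (xs i (ts i)) (xs i) /\
        solves_eta n m B K P Q lam sigma (xs i (ts i)) (xs i) (etas i)) ->
     (forall i, valid_idx fin (S i) ->
        xs (S i) (ts (S i)) = xs i (ts (S i)) /\
        etas (S i) (ts (S i)) = etas i (ts (S i))) ->
     (forall i, valid_idx fin (S i) ->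
        is_inf (fun t => ts i < t /\
                  etas i t + theta * trig_term n m B K P Q sigma (xs i t)
                     (fun j => xs i (ts i) j - xs i t j) <= 0)
               (ts (S i))) ->
     (forall N, fin = Some N ->
        forall t, ts N < t ->
          ~ (etas N t + theta * trig_term n m B K P Q sigma (xs N t)
                (fun j => xs N (ts N) j - xs N t j) <= 0)) ->
     forall i t, valid_idx fin i ->
       ((i = 0%nat /\ t = 0) \/ ts i < t) ->
       (valid_idx fin (S i) -> t <= ts (S i)) ->
       etas i t + theta * trig_term n m B K P Q sigma (xs i t)
                     (fun j => xs i (ts i) j - xs i t j) >= 0 /\
       etas i t >= 0)
  /\
  (* Part 2: static next execution time <= dynamic next execution time *)
  (forall (ti : R) (x : R -> Vec) (eta : R -> R) (td : R),
     vnonzero n (x ti) ->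
     0 <= eta ti ->
     solves_x n m A B K (x ti) x ->
     solves_eta n m B K P Q lam sigma (x ti) x eta ->
     is_inf (fun t => ti < t /\
               eta t + theta * trig_term n m B K P Q sigma (x t)
                  (fun j => x ti j - x t j) <= 0) td ->
     exists tsn, tsn <= td /\
       is_inf (fun t => ti < t /\
                 trig_term n m B K P Q sigma (x t) (fun j => x ti j - x t j) <= 0) tsn).
Proof.
  intros n m A B K P Q lam sigma theta Hl Hs Ht _ _ HQ _.
  split.
  - intros fin ts xs etas H0 He0 Hsol Hjump Hinf Hlast.
    assert (Vm : forall i, valid_idx fin (S i) -> valid_idx fin i).
    { intros i; destruct fin; simpl; auto; lia. }
    assert (Seg : forall i t, valid_idx fin (S i) -> ts i < t <= ts (S i) ->
       0 <= etas i t + theta * trig_term n m B K P Q sigma (xs i t) (fun j => xs i (ts i) j - xs i t j)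
       /\ (forall s, ts i < s < t ->
       0 < etas i s + theta * trig_term n m B K P Q sigma (xs i s) (fun j => xs i (ts i) j - xs i s j))).
    { intros i t Hv Htt.
      destruct (Hsol i (Vm i Hv)) as [_ [Hx He]].
      destruct (seg _ (ts i) (ts (S i)) t (Hinf i Hv)
                  (cD n m A B K P Q sigma theta lam _ _ _ t Hx He) Htt) as [a b].
      split; auto. intros s Hs'; apply b; lra. }
    assert (Ind : forall i, valid_idx fin i -> 0 <= etas i (ts i)).
    { induction i as [|i IH]; intros Hv.
      - rewrite H0, He0; lra.
      - assert (Hle : ts i <= ts (S i)).
        { destruct (Hinf i Hv) as [_ h]. apply h. intros s [hs _]; lra. }
        destruct (Hjump i Hv) as [_ ->].
        destruct (Rle_lt_or_eq_dec _ _ Hle) as [hl|he].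
        + destruct (Seg i (ts (S i)) Hv (conj hl (Rle_refl _))) as [a b].
          destruct (Hsol i (Vm i Hv)) as [_ [_ He]].
          apply (eta_seg n m B K P Q lam sigma theta (xs i (ts i)) (xs i) (etas i) (ts i)); auto.
        + rewrite <- he. apply IH, Vm, Hv. }
    intros i t Hv Hcase Hbnd.
    destruct Hcase as [[-> ->]|Htt].
    + rewrite He0. 
      assert (Z : dot n (xs 0%nat 0) (mv n P (mv m B (mv n K (fun j => xs 0%nat (ts 0%nat) j - xs 0%nat 0 j))))
                   = 0).
      { apply dot_zero. apply mv_zero. apply mv_zero. apply mv_zero. intros j. rewrite H0; ring. }
      destruct (Hsol 0%nat Hv) as [Hnz _]. rewrite H0 in Hnz.
      pose proof (proj2 HQ _ Hnz) as Hq.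
      unfold trig_term. rewrite Z.
      assert (0 <= theta * (sigma * dot n (xs 0%nat 0) (mv n Q (xs 0%nat 0)) - 2 * 0)).
      { apply Rmult_le_pos; auto. apply Rlt_le. replace (sigma * dot n (xs 0%nat 0) (mv n Q (xs 0%nat 0)) - 2 * 0) with (sigma * dot n (xs 0%nat 0) (mv n Q (xs 0%nat 0))) by ring.
        apply Rmult_lt_0_compat; lra. }
      lra.
    + assert (Key : 0 <= etas i t + theta * trig_term n m B K P Q sigma (xs i t) (fun j => xs i (ts i) j - xs i t j)
       /\ (forall s, ts i < s < t ->
       0 < etas i s + theta * trig_term n m B K P Q sigma (xs i s) (fun j => xs i (ts i) j - xs i s j))).
      { destruct (classic (valid_idx fin (S i))) as [Hv'|Hv'].
        - apply Seg; auto.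
        - destruct fin as [N|]; simpl in Hv, Hv'; [|tauto].
          assert (i = N) by lia. subst i.
          split.
          + apply Rlt_le, Rnot_le_lt, (Hlast N eq_refl t Htt).
          + intros s Hs'. apply Rnot_le_lt, (Hlast N eq_refl s). lra. }
      destruct Key as [a b].
      destruct (Hsol i Hv) as [_ [_ He]].
      split; [lra|].
      apply Rle_ge, (eta_seg n m B K P Q lam sigma theta (xs i (ts i)) (xs i) (etas i) (ts i)); auto.
  - intros ti x eta td _ Heta Hx He Hinf.
    assert (Cl : forall t, ti < t ->
       eta t + theta * trig_term n m B K P Q sigma (x t) (fun j => x ti j - x t j) <= 0 ->
       exists s, ti < s <= t /\ trig_term n m B K P Q sigma (x s) (fun j => x ti j - x s j) <= 0).
    { intros t h1 h2. apply (static_pt n m B K P Q lam sigma theta ti x eta t); auto. }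
    set (E := fun y => ti < - y /\ trig_term n m B K P Q sigma (x (-y)) (fun j => x ti j - x (-y) j) <= 0).
    assert (Hb : bound E). { exists (- ti). intros y [hy _]; lra. }
    assert (Hne : exists y, E y).
    { destruct (inf_nonempty _ _ Hinf) as [t [h1 h2]].
      destruct (Cl t h1 h2) as [s [hs1 hs2]]. exists (-s). unfold E. rewrite Ropp_involutive. split; [lra|exact hs2]. }
    destruct (completeness E Hb Hne) as [l [Hl1 Hl2]].
    assert (Hi : is_inf (fun t => ti < t /\
                 trig_term n m B K P Q sigma (x t) (fun j => x ti j - x t j) <= 0) (-l)).
    { split.
      - intros s Hs'. assert (- s <= l). { apply Hl1. unfold E. rewrite Ropp_involutive. exact Hs'. } lra.
      - intros b hb. assert (l <= - b). { apply Hl2. intros y Hy. assert (b <= - y) by (apply hb; exact Hy). lra. } lra. }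
    exists (-l). split; auto.
    destruct Hinf as [_ h]. apply h. intros s [hs1 hs2].
    destruct (Cl s hs1 hs2) as [s' [a b]].
    destruct Hi as [h' _]. assert (-l <= s') by (apply h'; split; lra). lra.
Qed.
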